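(* Let $A$ be a hypermatrix of order $n$. Then $A$ is an alternating sign hypermatrix if and only if $\Xi(A)$ is a corner-sum hypermatrix of order $n$ satisfying, for all $i,j,k\in[n]$, $\Xi(A)_{i,j,k}-\Xi(A)_{i-1,j,k}-\Xi(A)_{i,j-1,k}+\Xi(A)_{i-1,j-1,k}\in\{0,1\}$, $\Xi(A)_{i,j,k}-\Xi(A)_{i-1,j,k}-\Xi(A)_{i,j,k-1}+\Xi(A)_{i-1,j,k-1}\in\{0,1\}$, and $\Xi(A)_{i,j,k}-\Xi(A)_{i,j-1,k}-\Xi(A)_{i,j,k-1}+\Xi(A)_{i,j-1,k-1}\in\{0,1\}$.
   Context: Let $[n]=\{1,\dots,n\}$ and $[0,n]=\{0,1,\dots,n\}$. A hypermatrix of order $n$ is an integer array $A=(A_{i,j,k})_{i,j,k\in[n]}$; its lines are the $n$-tuples obtained by fixing two of the three indices (rows, columns, vertical lines). An alternating sign hypermatrix (ASHM) of order $n$ is a hypermatrix with entries in $\{0,1,-1\}$ such that in every line the nonzero entries alternate in sign, beginning and ending with $+1$. For a hypermatrix $A$ of order $n$, $\Xi(A)$ is the array indexed by $[0,n]^3$ with $\Xi(A)_{i,j,k}=\sum_{a=1}^i\sum_{b=1}^j\sum_{c=1}^k A_{a,b,c}$. A corner-sum hypermatrix of order $n$ is an integer array $C$ indexed by $[0,n]^3$ such that for all $i,j\in[0,n]$: $C_{i,j,0}=C_{i,0,j}=C_{0,i,j}=0$, $C_{i,j,n}=C_{i,n,j}=C_{n,i,j}=ij$, and for all $k\in[n]$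 each of $C_{i,j,k}-C_{i,j,k-1}$, $C_{i,k,j}-C_{i,k-1,j}$, $C_{k,i,j}-C_{k-1,i,j}$ is an integer in $\{\max(0,i+j-n),\dots,\min(i,j)\}$. *)

(* Defs.v *)
From mathcomp Require Import all_boot all_order all_algebra.
Set Implicit Arguments. Unset Strict Implicit. Unset Printing Implicit Defensive.
Import Order.TTheory GRing.Theory Num.Theory.
Local Open Scope ring_scope.

(* A hypermatrix of order n: an integer array; only the entries A i j k with
   i, j, k in [n] = {1,...,n} (1-based, as in the paper) are meaningful. *)
Definition hypermatrix := nat -> nat -> nat -> int.

(* Nonzero entries of a line alternate in sign, beginning and ending with +1:
   the nonzero subsequence is [:: 1; -1; 1; ...; 1] (odd length). *)
Definition alt_line (s : seq int) : bool :=
  all (fun x => (x == 0) || (x == 1) || (x == -1)) s &&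
  (let t := [seq x <- s | x != 0] in
   (t == mkseq (fun m => (-1) ^+ m) (size t)) && odd (size t)).

Definition is_ASHM (n : nat) (A : hypermatrix) : Prop :=
  (forall j k, (1 <= j <= n)%N -> (1 <= k <= n)%N ->
     alt_line [seq A i j k | i <- iota 1 n]) /\
  (forall i k, (1 <= i <= n)%N -> (1 <= k <= n)%N ->
     alt_line [seq A i j k | j <- iota 1 n]) /\
  (forall i j, (1 <= i <= n)%N -> (1 <= j <= n)%N ->
     alt_line [seq A i j k | k <- iota 1 n]).

Definition Xi (A : hypermatrix) : nat -> nat -> nat -> int :=
  fun i j k => \sum_(1 <= a < i.+1) \sum_(1 <= b < j.+1) \sum_(1 <= c < k.+1) A a b c.

Definition in_range (n i j : nat) (d : int) : bool :=
  ((i + j - n)%N%:Z <= d) && (d <= (minn i j)%:Z).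

Definition is_corner_sum (n : nat) (C : nat -> nat -> nat -> int) : Prop :=
  forall i j, (i <= n)%N -> (j <= n)%N ->
    [/\ C i j 0 = 0, C i 0 j = 0 & C 0 i j = 0] /\
    [/\ C i j n = (i * j)%N%:Z, C i n j = (i * j)%N%:Z & C n i j = (i * j)%N%:Z] /\
       (forall k, (1 <= k <= n)%N ->
          [/\ in_range n i j (C i j k - C i j k.-1),
              in_range n i j (C i k j - C i k.-1 j) &
              in_range n i j (C k i j - C k.-1 i j)]).

Definition in01 (x : int) : bool := (x == 0) || (x == 1).

(* Main.v *)
Require Import Defs.
From mathcomp Require Import all_boot all_order all_algebra.
From mathcomp Require Import zify ring lra.
Import Order.TTheory GRing.Theory Num.Theory.
Local Open Scope ring_scope.

Definition vals (x : int) : bool := (x == 0) || (x == 1) || (x == -1).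

Fixpoint ok (b : bool) (s : seq int) : bool :=
  if s is x :: s' then in01 ((b:nat)%:Z + x) && ok ((b:nat)%:Z + x == 1) s' else b.

Definition PS (b : bool) (s : seq int) : Prop :=
  (forall m, (m <= size s)%N -> in01 ((b:nat)%:Z + \sum_(x <- take m s) x)) /\
  (b:nat)%:Z + \sum_(x <- s) x = 1.

Lemma in01_eq {y : int} : in01 y -> ((y == 1 : bool) : nat)%:Z = y.
Proof. by case/orP => /eqP ->. Qed.

Lemma okP b s : ok b s <-> PS b s.
Proof.
elim: s b => [|x s IH] b.
  rewrite /PS /= big_nil addr0; split.
    by move=> Hb; split => [m _|]; case: b Hb; rewrite //= take_nil big_nil.
  by case: b => // [[_]].
rewrite /= /PS /=; split.
  case/andP=> H01 /IH [H1 H2]; split.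
    case=> [|m] Hm; first by rewrite take0 big_nil addr0; case: b {H01 H1 H2}.
    by rewrite /= big_cons addrA -(in01_eq H01); apply: H1.
  by rewrite big_cons addrA -(in01_eq H01).
move=> [H1 H2].
have H01 : in01 ((b:nat)%:Z + x).
  by have := H1 1%N isT; rewrite /= take0 big_cons big_nil addr0.
rewrite H01 /=; apply/IH; split.
  move=> m Hm; rewrite (in01_eq H01).
  by have := H1 m.+1 Hm; rewrite /= big_cons addrA.
by rewrite (in01_eq H01) -H2 big_cons addrA.
Qed.

Lemma mkseqS' (T : Type) (f : nat -> T) n : mkseq f n.+1 = f 0%N :: mkseq (fun m => f m.+1) n.
Proof. by rewrite /mkseq /= -[1%N]addn0 iotaDl -map_comp; congr (_ :: _); apply: eq_map => m /=; rewrite add1n. Qed.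

Lemma in01_vals {b : bool} {x} : in01 ((b:nat)%:Z + x) -> vals x.
Proof.
case: b; rewrite /in01 /vals /= => /orP[]/eqP H.
- by have -> : x = -1 by lia.
- by have -> : x = 0 by lia.
- by have -> : x = 0 by lia.
- by have -> : x = 1 by lia.
Qed.

Lemma alt_ok (b : bool) (s : seq int) :
  (all vals s && (let t := [seq x <- s | x != 0] in
     (t == mkseq (fun m => (-1) ^+ (m + b)) (size t)) && (odd (size t) != b)))
  = ok b s.
Proof.
elim: s b => [|x s IH] b; first by case: b.
rewrite /=.
have [->|] := eqVneq x 0.
  rewrite /= addr0 -IH; case: b => //=.
have [->|] := eqVneq x 1.
  move=> _; rewrite /= mkseqS' eqseq_cons.
  case: b => /=.
    by rewrite andbF.
  rewrite -(IH true) /=.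
  congr (_ && (_ && _)).
    by congr (_ == _); apply: eq_mkseq => m; rewrite addn0 addn1.
  by case: (odd _).
have [->|] := eqVneq x (-1).
  move=> _ _; rewrite /= mkseqS' eqseq_cons.
  case: b => /=; last by rewrite andbF.
  rewrite -(IH false) /=.
  congr (_ && (_ && _)).
    by congr (_ == _); apply: eq_mkseq => m; rewrite addn0 addn1 !exprS !mulN1r opprK.
  by case: (odd _).
move=> h1 h2 h3.
have : ~~ vals x by rewrite /vals (negbTE h1) (negbTE h2) (negbTE h3).
move=> hv; rewrite (negbTE hv) /=.
case H: (in01 _) => //.
by move: hv; rewrite (in01_vals H).
Qed.
Lemma alt_ok_false s : alt_line s = ok false s.
Proof.
rewrite -alt_ok /alt_line /=.
congr (_ && (_ && _)); last by case: (odd _).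
by congr (_ == _); apply: eq_mkseq => m; rewrite addn0.
Qed.

Lemma sum_iota (f : nat -> int) m :
  \sum_(1 <= c < m.+1) f c = \sum_(x <- [seq f c | c <- iota 1 m]) x.
Proof. by rewrite big_map /index_iota subSS subn0. Qed.

Lemma line_char (f : nat -> int) n :
  alt_line [seq f c | c <- iota 1 n] <->
  (forall k, (1 <= k <= n)%N -> in01 (\sum_(1 <= c < k.+1) f c)) /\
  \sum_(1 <= c < n.+1) f c = 1.
Proof.
rewrite alt_ok_false okP /PS /= size_map size_iota; split.
  move=> [H1 H2]; split; last by rewrite sum_iota -H2 add0r.
  move=> k /andP[_ Hk]; have := H1 k Hk.
  by rewrite add0r -map_take take_iota (minn_idPl Hk) -sum_iota.
move=> [H1 H2]; split; last by rewrite add0r -sum_iota.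
case=> [|k] Hk; first by rewrite take0 big_nil.
by rewrite add0r -map_take take_iota (minn_idPl Hk) -sum_iota; apply: H1.
Qed.
Lemma sumD1' (f : nat -> int) k : (0 < k)%N ->
  \sum_(1 <= c < k.+1) f c - \sum_(1 <= c < k.-1.+1) f c = f k.
Proof. by case: k => // k _; rewrite big_nat_recr //= addrAC subrr add0r. Qed.

Arguments sumD1' f {k}.

Definition D2 (g : nat -> nat -> int) j k :=
  \sum_(1 <= b < j.+1) \sum_(1 <= c < k.+1) g b c.

Lemma L2D (g : nat -> nat -> int) j k : (0 < j)%N -> (0 < k)%N ->
  D2 g j k - D2 g j.-1 k - D2 g j k.-1 + D2 g j.-1 k.-1 = g j k.
Proof.
move=> Hj Hk; rewrite /D2.
have E := fun f => sumD1' f Hj.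
have E1 := E (fun b => \sum_(1 <= c < k.+1) g b c).
have E2 := E (fun b => \sum_(1 <= c < k.-1.+1) g b c).
have E3 := sumD1' (g j) Hk.
rewrite -E3 -E1 -E2 /=. ring.
Qed.

Lemma L3D (h : nat -> nat -> nat -> int) i j k : (0 < j)%N -> (0 < k)%N ->
  \sum_(1 <= a < i.+1) D2 (h a) j k - \sum_(1 <= a < i.+1) D2 (h a) j.-1 k
  - \sum_(1 <= a < i.+1) D2 (h a) j k.-1 + \sum_(1 <= a < i.+1) D2 (h a) j.-1 k.-1
  = \sum_(1 <= a < i.+1) h a j k.
Proof.
move=> Hj Hk; rewrite -!sumrB -big_split /=.
by apply: eq_bigr => a _; apply: L2D.
Qed.

Lemma in01_bnd x : in01 x -> 0 <= x <= 1.
Proof. by case/orP => /eqP ->. Qed.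

Lemma sum01_le m1 m2 (F : nat -> int) :
  (forall x, (m1 <= x < m2)%N -> in01 (F x)) ->
  0 <= \sum_(m1 <= x < m2) F x <= (m2 - m1)%N%:Z.
Proof.
move=> H; apply/andP; split.
  have := @ler_sum_nat _ m1 m2 (fun _ => 0 : int) F.
  rewrite big1_eq; apply => x /H /in01_bnd /andP[] //.
have -> : (m2 - m1)%N%:Z = \sum_(m1 <= x < m2) (1 : int) by rewrite sumr_const_nat natz.
by apply: ler_sum_nat => x /H /in01_bnd /andP[].
Qed.

Lemma plane n (P : nat -> nat -> int) :
  (forall a, (1 <= a <= n)%N ->
     (forall j, (j <= n)%N -> in01 (\sum_(1 <= b < j.+1) P a b)) /\
     \sum_(1 <= b < n.+1) P a b = 1) ->
  (forall b, (1 <= b <= n)%N -> forall i, (i <= n)%N ->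
     in01 (\sum_(1 <= a < i.+1) P a b)) ->
  forall i j, (i <= n)%N -> (j <= n)%N ->
    in_range n i j (\sum_(1 <= a < i.+1) \sum_(1 <= b < j.+1) P a b).
Proof.
move=> HR HC i j Hi Hj.
have B1 := @sum01_le 1 i.+1 (fun a => \sum_(1 <= b < j.+1) P a b).
have /andP[S0 Si] : 0 <= \sum_(1 <= a < i.+1) \sum_(1 <= b < j.+1) P a b <= (i.+1 - 1)%N%:Z.
  apply: B1 => a /andP[Ha1 Ha2]; apply: (HR a _).1 => //.
  lia.
have /andP[_ Sj] : 0 <= \sum_(1 <= a < i.+1) \sum_(1 <= b < j.+1) P a b <= (j.+1 - 1)%N%:Z.
  rewrite exchange_big_nat; apply: sum01_le => b /andP[Hb1 Hb2]; apply: HC => //.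
  lia.
have Slow : (i%:Z - (n - j)%N%:Z) <= \sum_(1 <= a < i.+1) \sum_(1 <= b < j.+1) P a b.
  have -> : \sum_(1 <= a < i.+1) \sum_(1 <= b < j.+1) P a b =
     \sum_(1 <= a < i.+1) ((1 : int) - \sum_(j.+1 <= b < n.+1) P a b).
    apply: eq_big_nat => a /andP[Ha1 Ha2].
    have Ha : (1 <= a <= n)%N by lia.
    have Hjn : (j.+1 <= n.+1)%N by lia.
    rewrite -(HR a Ha).2 (@big_cat_nat _ _ _ j.+1 1 n.+1 xpredT _ isT Hjn) //=.
    by rewrite addrK.
  rewrite sumrB sumr_const_nat subSS subn0 exchange_big_nat.
  have /andP[_ T] : 0 <= \sum_(j.+1 <= b < n.+1) \sum_(1 <= a < i.+1) P a b <= (n.+1 - j.+1)%N%:Z.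
    apply: sum01_le => b /andP[Hb1 Hb2]; apply: HC => //.
    lia.
  rewrite subSS in T.
  rewrite natz; lra.
move: S0 Si Sj Slow; rewrite /in_range subSS !subn0.
set S := \sum_(_ <= _ < _) _ => S0 Si Sj Slow.
apply/andP; split; lia.
Qed.
Lemma line_char' (f : nat -> int) n : alt_line [seq f c | c <- iota 1 n] ->
  (forall i, (i <= n)%N -> in01 (\sum_(1 <= c < i.+1) f c)) /\
  \sum_(1 <= c < n.+1) f c = 1.
Proof.
move/line_char => [H1 H2]; split => // [[|i]] Hi; first by rewrite big_geq.
by apply: H1.
Qed.

Arguments line_char' {f n}.

Lemma sum1 i j : \sum_(1 <= a < i.+1) \sum_(1 <= b < j.+1) (1 : int) = (i * j)%N%:Z.
Proof. by rewrite sumr_const_nat sumr_const_nat !subSS !subn0 -mulrnA natz mulnC. Qed.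

Section Main.
Variable A : hypermatrix.

Lemma F1 i j k : (0 < i)%N -> (0 < j)%N ->
  Xi A i j k - Xi A i.-1 j k - Xi A i j.-1 k + Xi A i.-1 j.-1 k = \sum_(1 <= c < k.+1) A i j c.
Proof. by move=> Hi Hj; exact (L2D (fun a b => \sum_(1 <= c < k.+1) A a b c) i j Hi Hj). Qed.

Lemma F3 i j k : (0 < j)%N -> (0 < k)%N ->
  Xi A i j k - Xi A i j.-1 k - Xi A i j k.-1 + Xi A i j.-1 k.-1 = \sum_(1 <= a < i.+1) A a j k.
Proof. by move=> Hj Hk; exact (L3D A i j k Hj Hk). Qed.

Lemma XiE i j k : Xi A i j k =
  \sum_(1 <= b < j.+1) \sum_(1 <= a < i.+1) \sum_(1 <= c < k.+1) A a b c.
Proof. by rewrite /Xi exchange_big_nat. Qed.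

Lemma F2 i j k : (0 < i)%N -> (0 < k)%N ->
  Xi A i j k - Xi A i.-1 j k - Xi A i j k.-1 + Xi A i.-1 j k.-1 = \sum_(1 <= b < j.+1) A i b k.
Proof. by move=> Hi Hk; rewrite !XiE; exact (L3D (fun b a c => A a b c) j i k Hi Hk). Qed.

Lemma K1 i j k : (0 < k)%N ->
  Xi A i j k - Xi A i j k.-1 = \sum_(1 <= a < i.+1) \sum_(1 <= b < j.+1) A a b k.
Proof.
move=> Hk; rewrite /Xi -sumrB; apply: eq_bigr => a _; rewrite -sumrB.
by apply: eq_bigr => b _; exact: sumD1'.
Qed.

Lemma K2 i j k : (0 < k)%N ->
  Xi A i k j - Xi A i k.-1 j = \sum_(1 <= a < i.+1) \sum_(1 <= c < j.+1) A a k c.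
Proof.
move=> Hk; rewrite /Xi -sumrB; apply: eq_bigr => a _.
exact (sumD1' (fun b => \sum_(1 <= c < j.+1) A a b c) Hk).
Qed.

Lemma K3 i j k : (0 < k)%N ->
  Xi A k i j - Xi A k.-1 i j = \sum_(1 <= b < i.+1) \sum_(1 <= c < j.+1) A k b c.
Proof. by move=> Hk; exact (sumD1' (fun a => \sum_(1 <= b < i.+1) \sum_(1 <= c < j.+1) A a b c) Hk). Qed.

End Main.

Theorem mainTheorem4 (n : nat) (A : hypermatrix) :
  is_ASHM n A <->
  (is_corner_sum n (Xi A) /\
   forall i j k, (1 <= i <= n)%N -> (1 <= j <= n)%N -> (1 <= k <= n)%N ->
     [/\ in01 (Xi A i j k - Xi A i.-1 j k - Xi A i j.-1 k + Xi A i.-1 j.-1 k),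
         in01 (Xi A i j k - Xi A i.-1 j k - Xi A i j k.-1 + Xi A i.-1 j k.-1) &
         in01 (Xi A i j k - Xi A i j.-1 k - Xi A i j k.-1 + Xi A i j.-1 k.-1)]).
Proof.
split.
  move=> [Hr [Hc Hv]].
  have Lr := fun j k Hj Hk => line_char' (Hr j k Hj Hk).
  have Lc := fun i k Hi Hk => line_char' (Hc i k Hi Hk).
  have Lv := fun i j Hi Hj => line_char' (Hv i j Hi Hj).
  split.
    move=> i j Hi Hj; split; [split|split; [split|]].
    - by rewrite /Xi big1 // => a _; rewrite big1 // => b _; rewrite big_geq.
    - by rewrite /Xi big1 // => a _; rewrite big_geq.
    - by rewrite /Xi big_geq.
    - rewrite /Xi -sum1; apply: eq_big_nat => a Ha; apply: eq_big_nat => b Hb.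
      apply: (Lv a b _ _).2; lia.
    - rewrite /Xi -sum1; apply: eq_big_nat => a Ha.
      rewrite exchange_big_nat; apply: eq_big_nat => c Hc'.
      apply: (Lc a c _ _).2; lia.
    - rewrite /Xi -sum1 exchange_big_nat; apply: eq_big_nat => b Hb.
      rewrite exchange_big_nat; apply: eq_big_nat => c Hc'.
      apply: (Lr b c _ _).2; lia.
    - move=> k /andP[Hk1 Hk2]; split.
      + rewrite K1 //; apply: plane => //.
          by move=> a Ha; apply: Lc => //; lia.
        by move=> b Hb i' Hi'; apply: (Lr b k Hb ltac:(lia)).1.
      + rewrite K2 //; apply: plane => //.
          by move=> a Ha; apply: Lv => //; lia.
        by move=> c Hc' i' Hi'; apply: (Lr k c ltac:(lia) Hc').1.
      + rewrite K3 //; apply: plane => //.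
          by move=> b Hb; apply: Lv => //; lia.
        by move=> c Hc' i' Hi'; apply: (Lc k c ltac:(lia) Hc').1.
  move=> i j k Hi Hj Hk; split.
  - rewrite F1; try lia; apply: (Lv i j Hi Hj).1; lia.
  - rewrite F2; try lia; apply: (Lc i k Hi Hk).1; lia.
  - rewrite F3; try lia; apply: (Lr j k Hj Hk).1; lia.
move=> [HC HD]; split; [|split].
- move=> j k Hj Hk; apply/line_char; split.
    by move=> i Hi; rewrite -F3; try lia; have [] := HD i j k Hi Hj Hk.
  have Hn : (1 <= n <= n)%N by lia.
  rewrite -F3; try lia.
  have [_ [[_ _ E1] _]] := HC j k ltac:(lia) ltac:(lia).
  have [_ [[_ _ E2] _]] := HC j.-1 k ltac:(lia) ltac:(lia).
  have [_ [[_ _ E3] _]] := HC j k.-1 ltac:(lia) ltac:(lia).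
  have [_ [[_ _ E4] _]] := HC j.-1 k.-1 ltac:(lia) ltac:(lia).
  rewrite E1 E2 E3 E4; nia.
- move=> i k Hi Hk; apply/line_char; split.
    by move=> j Hj; rewrite -F2; try lia; have [] := HD i j k Hi Hj Hk.
  rewrite -F2; try lia.
  have [_ [[_ E1 _] _]] := HC i k ltac:(lia) ltac:(lia).
  have [_ [[_ E2 _] _]] := HC i.-1 k ltac:(lia) ltac:(lia).
  have [_ [[_ E3 _] _]] := HC i k.-1 ltac:(lia) ltac:(lia).
  have [_ [[_ E4 _] _]] := HC i.-1 k.-1 ltac:(lia) ltac:(lia).
  rewrite E1 E2 E3 E4; nia.
- move=> i j Hi Hj; apply/line_char; split.
    by move=> k Hk; rewrite -F1; try lia; have [] := HD i j k Hi Hj Hk.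
  rewrite -F1; try lia.
  have [_ [[E1 _ _] _]] := HC i j ltac:(lia) ltac:(lia).
  have [_ [[E2 _ _] _]] := HC i.-1 j ltac:(lia) ltac:(lia).
  have [_ [[E3 _ _] _]] := HC i j.-1 ltac:(lia) ltac:(lia).
  have [_ [[E4 _ _] _]] := HC i.-1 j.-1 ltac:(lia) ltac:(lia).
  rewrite E1 E2 E3 E4; nia.
Qed.
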